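(* Let $X$ be a perfect Polish space (i.e. without isolated points). For the generic compact set $K\subseteq X$ there is a continuous gauge function $h$ such that $0<\mathcal{H}^{h}(K)<\infty$.
   Context: $\mathcal{K}(X)$ denotes the set of non-empty compact subsets of $X$ with the Hausdorff metric $d_H(K_1,K_2)=\min\{r: K_1\subseteq B(K_2,r),\ K_2\subseteq B(K_1,r)\}$, where $B(A,r)=\{x: \operatorname{dist}(A,\{x\})\le r\}$. ''The generic compact set has property P'' means the set of $K\in\mathcal{K}(X)$ with property P is co-meager in $\mathcal{K}(X)$. A gauge function is a function $h\colon[0,\infty)\to[0,\infty)$ that is non-decreasing, right-continuous, and satisfies $h(x)=0$ iff $x=0$. For $A\subseteq X$, $\mathcal{H}^h_\delta(A)=\inf\{\sum_{i=1}^\infty h(\operatorname{diam}A_i): A\subseteq\bigcup_i A_i,\ \operatorname{diam}A_i\le\delta\}$ and $\mathcal{H}^h(A)=\lim_{\delta\to0+}\mathcal{H}^h_\delta(A)$. *)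

(* Defs.v *)
From Stdlib Require Import Reals Lra List Classical ClassicalEpsilon.
Open Scope R_scope.

Definition Rsup (E : R -> Prop) : R :=
  match excluded_middle_informative (bound E /\ exists x, E x) with
  | left H => proj1_sig (completeness E (proj1 H) (proj2 H))
  | right _ => 0
  end.

Definition Rinf (E : R -> Prop) : R := - Rsup (fun r => E (- r)).

Inductive ER : Type := Fin (r : R) | PInf.

Definition ER_le (a b : ER) : Prop :=
  match a, b with
  | Fin x, Fin y => x <= y
  | _, PInf => True
  | PInf, Fin _ => False
  end.

Definition ER_lt (a b : ER) : Prop :=
  match a, b with
  | Fin x, Fin y => x < y
  | Fin _, PInf => True
  | PInf, _ => False
  end.

Definition ER_add (a b : ER) : ER :=
  match a, b with
  | Fin x, Fin y => Fin (x + y)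
  | _, _ => PInf
  end.

Definition ER_sup (S : ER -> Prop) : ER :=
  match excluded_middle_informative (S PInf \/ ~ bound (fun r => S (Fin r))) with
  | left _ => PInf
  | right _ => Fin (Rsup (fun r => S (Fin r)))
  end.

(* infimum of a set of extended reals (used for sets of non-negative values);
   the infimum of the empty set is +oo *)
Definition ER_inf (S : ER -> Prop) : ER :=
  match excluded_middle_informative (exists r, S (Fin r)) with
  | left _ => Fin (Rinf (fun r => S (Fin r)))
  | right _ => PInf
  end.

Fixpoint ER_psum (f : nat -> ER) (n : nat) : ER :=
  match n with
  | O => f O
  | S m => ER_add (ER_psum f m) (f (S m))
  end.

Definition ER_series (f : nat -> ER) : ER :=
  ER_sup (fun v => exists n, v = ER_psum f n).

Record MetricSpace : Type := {
  pt :> Type;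
  dist : pt -> pt -> R;
  dist_eq0 : forall x y, dist x y = 0 <-> x = y;
  dist_sym : forall x y, dist x y = dist y x;
  dist_tri : forall x y z, dist x z <= dist x y + dist y z
}.

Arguments dist {m} _ _.

Section Metric.
Variable X : MetricSpace.

Definition complete_space : Prop :=
  forall u : nat -> X,
    (forall eps, 0 < eps -> exists N, forall n m, (n >= N)%nat -> (m >= N)%nat ->
        dist (u n) (u m) < eps) ->
    exists l : X, forall eps, 0 < eps -> exists N, forall n, (n >= N)%nat ->
        dist (u n) l < eps.

Definition separable_space : Prop :=
  exists s : nat -> X, forall x eps, 0 < eps -> exists n, dist x (s n) < eps.

Definition polish_space : Prop := complete_space /\ separable_space.

Definition perfect_space : Prop :=
  forall (x : X) eps, 0 < eps -> exists y, y <> x /\ dist x y < eps.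

Definition open_set (U : X -> Prop) : Prop :=
  forall x, U x -> exists eps, 0 < eps /\ forall y, dist x y < eps -> U y.

Definition compact_set (K : X -> Prop) : Prop :=
  forall (I : Type) (U : I -> X -> Prop),
    (forall i, open_set (U i)) ->
    (forall x, K x -> exists i, U i x) ->
    exists l : list I, forall x, K x -> exists i, In i l /\ U i x.

Definition KX : Type := { K : X -> Prop | (exists x, K x) /\ compact_set K }.

Definition dist_set (A : X -> Prop) (x : X) : R :=
  Rinf (fun r => exists a, A a /\ r = dist a x).

Definition Bset (A : X -> Prop) (r : R) : X -> Prop :=
  fun x => dist_set A x <= r.

Definition incl (A B : X -> Prop) : Prop := forall x, A x -> B x.

(* Hausdorff metric; for non-empty compact sets the infimum is a minimum *)
Definition dH (K1 K2 : KX) : R :=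
  Rinf (fun r => incl (proj1_sig K1) (Bset (proj1_sig K2) r)
              /\ incl (proj1_sig K2) (Bset (proj1_sig K1) r)).

(* diameter, in [0, +oo] (diam of empty set = 0) *)
Definition diam (A : X -> Prop) : ER :=
  let D := fun r => exists x y, A x /\ A y /\ r = dist x y in
  match excluded_middle_informative (exists x, A x) with
  | left _ =>
      match excluded_middle_informative (bound D) with
      | left _ => Fin (Rsup D)
      | right _ => PInf
      end
  | right _ => Fin 0
  end.

Definition ER_app (h : R -> R) (v : ER) : ER :=
  match v with Fin d => Fin (h d) | PInf => PInf end.

Definition Hh_delta (h : R -> R) (delta : R) (A : X -> Prop) : ER :=
  ER_inf (fun v => exists C : nat -> X -> Prop,
            (forall x, A x -> exists i, C i x) /\
            (forall i, ER_le (diam (C i)) (Fin delta)) /\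
            v = ER_series (fun i => ER_app h (diam (C i)))).

(* H^h(A) = lim_{delta -> 0+} H^h_delta(A); as H^h_delta(A) is non-increasing
   in delta, this limit is the supremum over delta > 0 *)
Definition Hh (h : R -> R) (A : X -> Prop) : ER :=
  ER_sup (fun v => exists delta, 0 < delta /\ v = Hh_delta h delta A).

End Metric.

Arguments KX : clear implicits.

Section Baire.
Variables (T : Type) (d : T -> T -> R).

Definition closure_d (N : T -> Prop) : T -> Prop :=
  fun x => forall eps, 0 < eps -> exists y, N y /\ d x y < eps.

Definition interior_d (C : T -> Prop) : T -> Prop :=
  fun x => exists eps, 0 < eps /\ forall y, d x y < eps -> C y.

Definition nowhere_dense_d (N : T -> Prop) : Prop :=
  forall x, ~ interior_d (closure_d N) x.

Definition meager_d (M : T -> Prop) : Prop :=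
  exists N : nat -> T -> Prop, (forall n, nowhere_dense_d (N n)) /\
    (forall x, M x -> exists n, N n x).

Definition comeager_d (S : T -> Prop) : Prop := meager_d (fun x => ~ S x).
End Baire.

Definition generic_compact (X : MetricSpace) (P : (X -> Prop) -> Prop) : Prop :=
  comeager_d (KX X) (dH X) (fun K => P (proj1_sig K)).

Definition gauge (h : R -> R) : Prop :=
  (forall x, 0 <= x -> 0 <= h x) /\
  (forall x y, 0 <= x -> x <= y -> h x <= h y) /\
  (forall x, 0 <= x -> forall eps, 0 < eps -> exists delta, 0 < delta /\
      forall y, x <= y < x + delta -> Rabs (h y - h x) < eps) /\
  (forall x, 0 <= x -> (h x = 0 <-> x = 0)).

Definition continuous_nonneg (h : R -> R) : Prop :=
  forall x, 0 <= x -> forall eps, 0 < eps -> exists delta, 0 < delta /\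
    forall y, 0 <= y -> Rabs (y - x) < delta -> Rabs (h y - h x) < eps.

(* Main.v *)
Require Import Defs.
From Stdlib Require Import Reals.
Open Scope R_scope.
From Stdlib Require Import Lra Lia List Classical ClassicalEpsilon ZArith.
Require Import Defs.
Open Scope R_scope.

Lemma Rsup_spec (E : R -> Prop) : bound E -> (exists x, E x) -> is_lub E (Rsup E).
Proof.
  intros Hb He. unfold Rsup.
  destruct (excluded_middle_informative (bound E /\ exists x, E x)) as [H|H].
  - exact (proj2_sig (completeness E (proj1 H) (proj2 H))).
  - exfalso; tauto.
Qed.

Lemma Rsup_ub (E : R -> Prop) x : bound E -> E x -> x <= Rsup E.
Proof. intros Hb Hx. destruct (Rsup_spec E Hb (ex_intro _ x Hx)) as [H _]. apply H, Hx. Qed.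

Lemma Rsup_le (E : R -> Prop) b : (exists x, E x) -> (forall x, E x -> x <= b) -> Rsup E <= b.
Proof.
  intros He Hb. assert (Hbd : bound E) by (exists b; exact Hb).
  destruct (Rsup_spec E Hbd He) as [_ H]. apply H. exact Hb.
Qed.

Lemma Rinf_lb (E : R -> Prop) x : (exists m, forall y, E y -> m <= y) -> E x -> Rinf E <= x.
Proof.
  intros [m Hm] Hx. unfold Rinf.
  assert (H : - x <= Rsup (fun r => E (- r))).
  { apply Rsup_ub. exists (- m). intros r Hr. specialize (Hm _ Hr). lra.
    rewrite Ropp_involutive; exact Hx. }
  lra.
Qed.

Lemma Rinf_ge (E : R -> Prop) b : (exists x, E x) -> (forall y, E y -> b <= y) -> b <= Rinf E.
Proof.
  intros [x Hx] Hb. unfold Rinf.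
  assert (H : Rsup (fun r => E (- r)) <= - b).
  { apply Rsup_le. exists (- x). rewrite Ropp_involutive; exact Hx.
    intros r Hr. specialize (Hb _ Hr). lra. }
  lra.
Qed.

Lemma Rinf_lt (E : R -> Prop) r : (exists m, forall y, E y -> m <= y) -> (exists x, E x) ->
  Rinf E < r -> exists x, E x /\ x < r.
Proof.
  intros Hm He Hlt. apply NNPP; intro Hn.
  assert (r <= Rinf E); [|lra].
  apply Rinf_ge; auto. intros y Hy. apply Rnot_lt_le. intro. apply Hn. exists y. auto.
Qed.

Notation KS K := (proj1_sig K).

Section Basic.
Variable X : MetricSpace.

Lemma dist_refl (x : X) : dist x x = 0.
Proof. apply dist_eq0. reflexivity. Qed.

Lemma dist_pos (x y : X) : 0 <= dist x y.
Proof.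
  pose proof (dist_tri X x y x). rewrite dist_refl in H. rewrite (dist_sym X y x) in H. lra.
Qed.

Definition Xdec (x y : X) : {x = y} + {x <> y} := excluded_middle_informative (x = y).

Lemma dist_set_le (A : X -> Prop) x a : A a -> dist_set X A x <= dist a x.
Proof.
  intro Ha. unfold dist_set. apply Rinf_lb.
  - exists 0. intros y [b [_ ->]]. apply dist_pos.
  - exists a. auto.
Qed.

Lemma dist_set_ge0 (A : X -> Prop) x : (exists a, A a) -> 0 <= dist_set X A x.
Proof.
  intros [a Ha]. unfold dist_set. apply Rinf_ge.
  - exists (dist a x). exists a; auto.
  - intros y [b [_ ->]]. apply dist_pos.
Qed.

Lemma dist_set_lt (A : X -> Prop) x r : (exists a, A a) -> dist_set X A x < r ->
  exists a, A a /\ dist a x < r.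
Proof.
  intros [a0 Ha0] H. unfold dist_set in H. apply Rinf_lt in H.
  - destruct H as [y [[b [Hb ->]] Hy]]. eauto.
  - exists 0. intros y [b [_ ->]]. apply dist_pos.
  - exists (dist a0 x). exists a0; auto.
Qed.

Lemma compact_bounded (K : X -> Prop) x0 : compact_set X K ->
  exists B, forall x, K x -> dist x0 x <= B.
Proof.
  intro Hc.
  destruct (Hc nat (fun n x => dist x0 x < INR n)) as [l Hl].
  - intros n x Hx. exists (INR n - dist x0 x). split. lra.
    intros y Hy. pose proof (dist_tri X x0 x y). lra.
  - intros x _. destruct (archimed (dist x0 x)) as [H1 _].
    exists (Z.to_nat (up (dist x0 x))). rewrite INR_IZR_INZ.
    rewrite Z2Nat.id. lra. apply le_IZR. pose proof (dist_pos x0 x). lra.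
  - exists (fold_right (fun n acc => Rmax (INR n) acc) 0 l).
    intros x Hx. destruct (Hl x Hx) as [i [Hi Hd]].
    assert (INR i <= fold_right (fun n acc => Rmax (INR n) acc) 0 l).
    { clear -Hi. induction l as [|a l IH]; simpl in *. contradiction.
      destruct Hi as [->|Hi]. apply Rmax_l. eapply Rle_trans. apply IH, Hi. apply Rmax_r. }
    lra.
Qed.


Lemma KS_ne (K : KX X) : exists x, KS K x.
Proof. exact (proj1 (proj2_sig K)). Qed.

Lemma KS_cpt (K : KX X) : compact_set X (KS K).
Proof. exact (proj2 (proj2_sig K)). Qed.

Definition dHset (K1 K2 : KX X) : R -> Prop := fun r =>
  incl X (proj1_sig K1) (Bset X (proj1_sig K2) r) /\ incl X (proj1_sig K2) (Bset X (proj1_sig K1) r).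

Lemma dHset_lb (K1 K2 : KX X) : exists m, forall y, dHset K1 K2 y -> m <= y.
Proof.
  exists 0. intros r [H1 _]. destruct (KS_ne K1) as [x Hx].
  specialize (H1 x Hx). unfold Bset in H1.
  pose proof (dist_set_ge0 (proj1_sig K2) x (KS_ne K2)). lra.
Qed.

Lemma dHset_ne (K1 K2 : KX X) : exists r, dHset K1 K2 r.
Proof.
  destruct (KS_ne K1) as [x1 H1]. destruct (KS_ne K2) as [x2 H2].
  destruct (compact_bounded _ x1 (KS_cpt K1)) as [B1 HB1].
  destruct (compact_bounded _ x2 (KS_cpt K2)) as [B2 HB2].
  exists (B1 + B2 + dist x1 x2). split.
  - intros x Hx. unfold Bset. eapply Rle_trans. apply (dist_set_le _ x x2 H2).
    specialize (HB1 x Hx). pose proof (dist_tri X x2 x1 x). rewrite (dist_sym X x2 x1) in H.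
    pose proof (HB2 x2 H2). pose proof (dist_pos x2 x2). lra.
  - intros x Hx. unfold Bset. eapply Rle_trans. apply (dist_set_le _ x x1 H1).
    specialize (HB2 x Hx). pose proof (dist_tri X x1 x2 x).
    pose proof (HB1 x1 H1). pose proof (dist_pos x1 x1). lra.
Qed.

Lemma dH_lt (K1 K2 : KX X) r : dH X K1 K2 < r ->
  (forall x, KS K1 x -> exists y, KS K2 y /\ dist y x < r) /\
  (forall y, KS K2 y -> exists x, KS K1 x /\ dist x y < r).
Proof.
  intro H. unfold dH in H. apply Rinf_lt in H; [|apply dHset_lb|apply dHset_ne].
  destruct H as [r' [[H1 H2] Hr']]. split.
  - intros x Hx. specialize (H1 x Hx). unfold Bset in H1.
    apply dist_set_lt. apply KS_ne. lra.
  - intros x Hx. specialize (H2 x Hx). unfold Bset in H2.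
    apply dist_set_lt. apply KS_ne. lra.
Qed.

Lemma dH_le (K1 K2 : KX X) r :
  (forall x, KS K1 x -> exists y, KS K2 y /\ dist y x <= r) ->
  (forall y, KS K2 y -> exists x, KS K1 x /\ dist x y <= r) -> dH X K1 K2 <= r.
Proof.
  intros H1 H2. unfold dH. apply Rinf_lb. apply dHset_lb. split.
  - intros x Hx. destruct (H1 x Hx) as [y [Hy Hd]]. unfold Bset.
    eapply Rle_trans. apply dist_set_le; eauto. auto.
  - intros x Hx. destruct (H2 x Hx) as [y [Hy Hd]]. unfold Bset.
    eapply Rle_trans. apply dist_set_le; eauto. auto.
Qed.

Lemma dH_refl (K : KX X) : dH X K K <= 0.
Proof.
  apply dH_le; intros x Hx; exists x; rewrite dist_refl; split; auto; lra.
Qed.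

Lemma list_compact (l : list X) : compact_set X (fun x => In x l).
Proof.
  intros I U _ Hcov. induction l as [|a l IH].
  - exists nil. intros x [].
  - destruct IH as [li Hli]. intros x Hx. apply Hcov. right; auto.
    destruct (Hcov a (or_introl eq_refl)) as [i Hi].
    exists (i :: li). intros x [<-|Hx]. exists i; split; auto. left; auto.
    destruct (Hli x Hx) as [j [Hj Hj']]. exists j; split; auto. right; auto.
Qed.

Definition mkKX (l : list X) (a : X) (Ha : In a l) : KX X :=
  exist _ (fun x => In x l) (conj (ex_intro _ a Ha) (list_compact l)).

Lemma finite_net (K : X -> Prop) rho : compact_set X K -> 0 < rho ->
  exists l, NoDup l /\ (forall p, In p l -> K p) /\ (forall x, K x -> exists p, In p l /\ dist p x < rho).
Proof.
  intros Hc Hr.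
  destruct (Hc X (fun i z => K i /\ dist i z < rho)) as [li Hli].
  - intros i x [Hi Hd]. exists (rho - dist i x). split. lra.
    intros y Hy. split; auto. pose proof (dist_tri X i x y). lra.
  - intros x Hx. exists x. split; auto. rewrite dist_refl; auto.
  - exists (nodup Xdec (filter (fun i => if excluded_middle_informative (K i) then true else false) li)).
    split; [apply NoDup_nodup|split].
    + intros p Hp. apply nodup_In, filter_In in Hp. destruct Hp as [_ Hp].
      destruct (excluded_middle_informative (K p)); auto; discriminate.
    + intros x Hx. destruct (Hli x Hx) as [i [Hi [Ki Hd]]]. exists i. split; auto.
      apply nodup_In, filter_In. split; auto.
      destruct (excluded_middle_informative (K i)); auto.
Qed.

Lemma min_sep (l : list X) : exists d, 0 < d /\
  forall a b, In a l -> In b l -> a <> b -> d <= dist a b.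
Proof.
  assert (Hone : forall a (l : list X), exists d, 0 < d /\ forall b, In b l -> a <> b -> d <= dist a b).
  { intros a. induction l0 as [|c l0 IH].
    - exists 1. split. lra. intros b [].
    - destruct IH as [d [Hd H]]. destruct (Xdec a c) as [->|Hac].
      + exists d. split; auto. intros b [<-|Hb] Hne. contradiction. auto.
      + assert (0 < dist a c). { pose proof (dist_pos a c). destruct H0; auto.
          exfalso. apply Hac. apply dist_eq0. auto. }
        exists (Rmin d (dist a c)). split. apply Rmin_pos; auto.
        intros b [<-|Hb] Hne. apply Rmin_r. eapply Rle_trans. apply Rmin_l. auto. }
  induction l as [|a l IH].
  - exists 1. split. lra. intros a b [].
  - destruct IH as [d [Hd H]]. destruct (Hone a l) as [d' [Hd' H']].
    exists (Rmin d d'). split. apply Rmin_pos; auto.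
    intros x y [<-|Hx] [<-|Hy] Hne.
    + contradiction.
    + eapply Rle_trans. apply Rmin_r. auto.
    + rewrite dist_sym. eapply Rle_trans. apply Rmin_r. apply H'; auto.
    + eapply Rle_trans. apply Rmin_l. auto.
Qed.

End Basic.

Definition tt (k : nat) : R := (/2)^k.

Lemma tt_pos k : 0 < tt k.
Proof. unfold tt. apply pow_lt. lra. Qed.

Lemma tt_S k : tt (S k) = tt k / 2.
Proof. unfold tt. simpl. lra. Qed.

Lemma tt_anti k k' : (k <= k')%nat -> tt k' <= tt k.
Proof.
  induction 1. lra. rewrite tt_S. pose proof (tt_pos m). lra.
Qed.

Lemma tt_lt k k' : (k < k')%nat -> tt k' <= tt k / 2.
Proof.
  intro H. rewrite <- tt_S. apply tt_anti. lia.
Qed.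

Lemma tt_small (a : R) (k0 : nat) : 0 < a -> exists k, (k0 < k)%nat /\ tt k < a.
Proof.
  intro Ha. destruct (pow_lt_1_zero (/2) ltac:(rewrite Rabs_pos_eq; lra) a Ha) as [N HN].
  exists (S (max k0 N)). split. lia.
  specialize (HN (S (max k0 N)) ltac:(lia)). rewrite Rabs_pos_eq in HN. exact HN.
  apply pow_le. lra.
Qed.

Section Clusters.
Variable X : MetricSpace.

Definition Good (K : X -> Prop) (s : R) (l : list X) : Prop :=
  NoDup l /\ (forall x, K x -> exists c, In c l /\ dist x c < s/8) /\
  (forall c, In c l -> exists x, K x /\ dist x c < s/8) /\
  (forall c c', In c l -> In c' l -> c <> c' -> 2*s <= dist c c').

Definition nearb (s : R) (c q : X) : bool := if Rlt_dec (dist q c) (s/2) then true else false.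

Lemma nearb_true s c q : nearb s c q = true <-> dist q c < s/2.
Proof. unfold nearb. destruct (Rlt_dec (dist q c) (s/2)); split; intro; auto; discriminate. Qed.

Lemma nearb_false s c q : nearb s c q = false <-> ~ dist q c < s/2.
Proof. unfold nearb. destruct (Rlt_dec (dist q c) (s/2)); split; intro; auto; try discriminate; contradiction. Qed.

Definition Qc (s : R) (l l' : list X) (m : nat) : Prop :=
  forall c, In c l -> length (filter (nearb s c) l') = m.

Lemma same_center K s l x x' c c' : Good K s l -> 0 < s -> dist x x' < s ->
  In c l -> In c' l -> dist x c < s/8 -> dist x' c' < s/8 -> c = c'.
Proof.
  intros [_ [_ [_ Hs]]] Hs0 Hxx Hc Hc' H1 H2. apply NNPP; intro Hne.
  specialize (Hs c c' Hc Hc' Hne).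
  pose proof (dist_tri X c x c'). pose proof (dist_tri X x x' c').
  rewrite (dist_sym X c x) in H. lra.
Qed.



Lemma filter_none (P : X -> bool) (l : list X) : (forall q, In q l -> P q = false) -> filter P l = nil.
Proof.
  induction l as [|a l IH]; intro H; simpl; auto.
  rewrite (H a (or_introl eq_refl)). apply IH. intros q Hq. apply H. right; auto.
Qed.

Lemma count_one (P : X -> bool) (l : list X) c : NoDup l -> In c l ->
  (forall q, In q l -> (P q = true <-> q = c)) -> length (filter P l) = 1%nat.
Proof.
  induction l as [|a l IH]; intros Hnd Hc HP. destruct Hc.
  inversion Hnd; subst. simpl.
  destruct Hc as [<-|Hc].
  - assert (Hpa : P a = true) by (apply HP; simpl; auto). rewrite Hpa. simpl.
    rewrite filter_none; auto. intros q Hq. destruct (P q) eqn:E; auto.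
    apply HP in E; [|right; auto]. subst. contradiction.
  - assert (Hpa : P a = false).
    { destruct (P a) eqn:E; auto. apply HP in E; [|left; auto]. subst. contradiction. }
    rewrite Hpa. apply IH; auto. intros q Hq. apply HP. right; auto.
Qed.

Lemma center_char K s l x q : Good K s l -> 0 < s -> K x -> dist x q < 3*s/8 ->
  exists c0, In c0 l /\ dist x c0 < s/8 /\ forall c, In c l -> (nearb s c q = true <-> c = c0).
Proof.
  intros HG Hs Hx Hq. pose proof HG as [_ [H1 [_ H3]]].
  destruct (H1 x Hx) as [c0 [Hc0 Hd]]. exists c0. split; auto. split; auto.
  intros c Hc. rewrite nearb_true. split.
  - intro Hlt. apply NNPP; intro Hne. specialize (H3 c c0 Hc Hc0 Hne).
    pose proof (dist_tri X c q c0). pose proof (dist_tri X q x c0).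
    rewrite (dist_sym X c q) in H. rewrite (dist_sym X q x) in H0. lra.
  - intros ->. pose proof (dist_tri X q x c0). rewrite (dist_sym X q x) in H. lra.
Qed.

End Clusters.

Section Dense.
Variable X : MetricSpace.

Lemma new_point (Hp : perfect_space X) (p0 : X) r (A : list X) : 0 < r ->
  exists q, ~ In q A /\ dist p0 q < r.
Proof.
  intro Hr.
  assert (H : exists r', 0 < r' /\ forall q, q <> p0 -> dist p0 q < r' -> ~ In q A).
  { induction A as [|a A IH].
    - exists 1. split. lra. intros q _ _ [].
    - destruct IH as [r' [Hr' H]]. destruct (Xdec X a p0) as [->|Hne].
      + exists r'. split; auto. intros q Hq Hd [->|HA]. contradiction. eapply H; eauto.
      + assert (0 < dist p0 a).
        { pose proof (dist_pos X p0 a). destruct H0; auto. exfalso. apply Hne. symmetry. apply dist_eq0. auto. }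
        exists (Rmin r' (dist p0 a)). split. apply Rmin_pos; auto.
        intros q Hq Hd [->|HA].
        * pose proof (Rmin_r r' (dist p0 q)). lra.
        * eapply H; eauto. pose proof (Rmin_l r' (dist p0 a)). lra. }
  destruct H as [r' [Hr' H]].
  destruct (Hp p0 (Rmin r r') (Rmin_pos _ _ Hr Hr')) as [q [Hq Hd]].
  exists q. split. apply H; auto. pose proof (Rmin_r r r'). lra.
  pose proof (Rmin_l r r'). lra.
Qed.

Lemma pad (Hp : perfect_space X) (p0 : X) r n (E : list X) : 0 < r -> NoDup E ->
  exists Q, length Q = n /\ NoDup (E ++ Q) /\ forall q, In q Q -> dist p0 q < r.
Proof.
  intros Hr HE. induction n as [|n IH].
  - exists nil. rewrite app_nil_r. split; auto. split; auto. intros q [].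
  - destruct IH as [Q [HQ1 [HQ2 HQ3]]].
    destruct (new_point Hp p0 r (E ++ Q) Hr) as [q [Hq Hd]].
    exists (Q ++ q :: nil). split. rewrite length_app. simpl. lia.
    split. rewrite app_assoc. apply NoDup_app; auto. constructor. intros []. constructor.
    intros a Ha [<-|[]]. contradiction.
    intros a Ha. apply in_app_or in Ha. destruct Ha as [Ha|[<-|[]]]; auto.
Qed.

Lemma max_list_ge (f : X -> nat) (l : list X) b c : In c l -> (f c <= fold_right (fun a acc => max (f a) acc) b l)%nat.
Proof.
  induction l as [|a l IH]; simpl; intros H. destruct H.
  destruct H as [<-|H]. lia. specialize (IH H). lia.
Qed.

Lemma max_list_ge0 (f : X -> nat) (l : list X) b : (b <= fold_right (fun a acc => max (f a) acc) b l)%nat.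
Proof. induction l as [|a l IH]; simpl; lia. Qed.

Lemma build (Hp : perfect_space X) (y : X -> Prop) s l rho : compact_set X y -> Good X y s l -> 0 < s -> 0 < rho ->
  rho <= s/100 ->
  exists F m, NoDup F /\ (2 <= m)%nat /\
    (forall q, In q F -> exists c, In c l /\ dist q c < s/8 + 2*rho) /\
    (forall c, In c l -> length (filter (nearb X s c) F) = m) /\
    (forall x, y x -> exists p, In p F /\ dist p x <= rho) /\
    (forall p, In p F -> exists x, y x /\ dist x p <= rho).
Proof.
  intros Hc HG Hs Hr Hrs. pose proof HG as [Hnd [H1 [H2 H3]]].
  destruct (finite_net X y rho Hc Hr) as [ly [Hly1 [Hly2 Hly3]]].
  set (nc := fun c => length (filter (nearb X s c) ly)).
  set (m := fold_right (fun a acc => max (nc a) acc) 2%nat l).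
  assert (Hp0 : forall c, In c l -> exists p0, In p0 ly /\ dist p0 c < s/8 + rho).
  { intros c Hcl. destruct (H2 c Hcl) as [x [Hx Hd]]. destruct (Hly3 x Hx) as [p [Hp1 Hp2]].
    exists p. split; auto. pose proof (dist_tri X p x c). lra. }
  assert (HP : forall l1, (forall c, In c l1 -> In c l) -> NoDup l1 ->
    exists P, NoDup (ly ++ P) /\
      (forall q, In q P -> exists c, In c l /\ exists p0, In p0 ly /\ dist p0 c < s/8 + rho /\ dist p0 q < rho) /\
      (forall c, In c l -> length (filter (nearb X s c) P) = if in_dec (Xdec X) c l1 then (m - nc c)%nat else 0%nat)).
  { induction l1 as [|c1 l1 IH]; intros Hsub Hnd1.
    - exists nil. rewrite app_nil_r. split; auto. split. intros q []. intros c _. simpl. reflexivity.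
    - inversion Hnd1; subst.
      destruct IH as [P [HP1 [HP2 HP3]]]. intros c0 Hc0; apply Hsub; right; auto. auto.
      destruct (Hp0 c1 (Hsub c1 (or_introl eq_refl))) as [p0 [Hp0a Hp0b]].
      destruct (pad Hp p0 rho (m - nc c1) (ly ++ P) Hr HP1) as [Q [HQ1 [HQ2 HQ3]]].
      exists (P ++ Q). split. rewrite app_assoc; auto. split.
      + intros q Hq. apply in_app_or in Hq. destruct Hq as [Hq|Hq]. auto.
        exists c1. split. apply Hsub; left; auto. exists p0. split; auto.
      + intros c Hcl. rewrite filter_app, length_app. rewrite HP3; auto.
        destruct (Xdec X c c1) as [->|Hne].
        * rewrite filter_ext_in with (g := fun _ => true). rewrite filter_true, HQ1.
          destruct (in_dec (Xdec X) c1 l1) as [Hin|Hnin]; [contradiction|].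
          destruct (in_dec (Xdec X) c1 (c1 :: l1)) as [_|Hn]; [lia|exfalso; apply Hn; left; auto].
          intros q Hq. apply nearb_true. specialize (HQ3 q Hq).
          pose proof (dist_tri X q p0 c1). rewrite (dist_sym X q p0) in H. lra.
        * rewrite filter_none. change (length (@nil X)) with 0%nat. rewrite Nat.add_0_r.
          destruct (in_dec (Xdec X) c l1) as [Hi1|Hi1]; destruct (in_dec (Xdec X) c (c1 :: l1)) as [Hi2|Hi2];
          first [reflexivity | (exfalso; apply Hi2; right; auto) | (destruct Hi2 as [Hh|Hh]; [congruence|contradiction])].
          intros q Hq. apply nearb_false. specialize (HQ3 q Hq).
          specialize (H3 c c1 Hcl (Hsub c1 (or_introl eq_refl)) Hne).
          pose proof (dist_tri X c q c1). pose proof (dist_tri X q p0 c1).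
          rewrite (dist_sym X c q) in H. rewrite (dist_sym X q p0) in H0. lra. }
  destruct (HP l (fun c H => H) Hnd) as [P [HP1 [HP2 HP3]]].
  exists (ly ++ P), m. split; auto. split. apply max_list_ge0. split; [|split; [|split]].
  - intros q Hq. apply in_app_or in Hq. destruct Hq as [Hq|Hq].
    + destruct (H1 q (Hly2 q Hq)) as [c [Hcc Hd]]. exists c. split; auto. lra.
    + destruct (HP2 q Hq) as [c [Hcc [p0 [_ [Ha Hb]]]]]. exists c. split; auto.
      pose proof (dist_tri X q p0 c). rewrite (dist_sym X q p0) in H. lra.
  - intros c Hcl. rewrite filter_app, length_app, HP3; auto.
    destruct (in_dec (Xdec X) c l); [|contradiction].
    assert (nc c <= m)%nat by (apply max_list_ge; auto). fold (nc c). lia.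
  - intros x Hx. destruct (Hly3 x Hx) as [p [Hp1 Hp2]]. exists p. split. apply in_or_app; auto. lra.
  - intros p Hpp. apply in_app_or in Hpp. destruct Hpp as [Hpp|Hpp].
    + exists p. split; auto. rewrite dist_refl. lra.
    + destruct (HP2 p Hpp) as [c [_ [p0 [Ha [_ Hb]]]]]. exists p0. split; auto. lra.
Qed.

End Dense.

Section Meager.
Variable X : MetricSpace.

Lemma nd_crit (N : KX X -> Prop) :
  (forall x eps, 0 < eps -> exists y eta, dH X x y < eps /\ 0 < eta /\ forall z, dH X y z < eta -> ~ N z) ->
  nowhere_dense_d (KX X) (dH X) N.
Proof.
  intros H x [eps [Heps Hint]]. destruct (H x eps Heps) as [y [eta [H1 [H2 H3]]]].
  destruct (Hint y H1 eta H2) as [z [Hz Hd]]. exact (H3 z Hd Hz).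
Qed.

Lemma near_good (F : list X) (z : KX X) s d eta : NoDup F -> 0 < s ->
  (forall a b, In a F -> In b F -> a <> b -> d <= dist a b) -> 2*s <= d -> eta <= s/8 ->
  (forall p, In p F -> exists w, KS z w /\ dist w p < eta) ->
  (forall w, KS z w -> exists p, In p F /\ dist p w < eta) -> Good X (KS z) s F.
Proof.
  intros Hnd Hs Hd Hsd He H1 H2. split; auto. split; [|split].
  - intros x Hx. destruct (H2 x Hx) as [p [Hp Hdp]]. exists p. split; auto. rewrite dist_sym. lra.
  - intros c Hc. destruct (H1 c Hc) as [w [Hw Hdw]]. exists w. split; auto. lra.
  - intros a b Ha Hb Hab. specialize (Hd a b Ha Hb Hab). lra.
Qed.

Definition NE (K : KX X) : Prop := forall k l, ~ Good X (KS K) (tt k) l.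
Definition NN (k : nat) (K : KX X) : Prop := exists l, Good X (KS K) (tt k) l /\
  ~ exists k' l' m, (k < k')%nat /\ (2 <= m)%nat /\ Good X (KS K) (tt k') l' /\ Qc X (tt k) l l' m.

Lemma nd_E : nowhere_dense_d (KX X) (dH X) NE.
Proof.
  apply nd_crit. intros K0 eps Heps.
  destruct (finite_net X (KS K0) (eps/2) (KS_cpt X K0) ltac:(lra)) as [F [HF1 [HF2 HF3]]].
  destruct (KS_ne X K0) as [x0 Hx0]. destruct (HF3 x0 Hx0) as [p [Hp _]].
  exists (mkKX X F p Hp).
  destruct (min_sep X F) as [d [Hd Hsep]].
  destruct (tt_small (d/2) 0 ltac:(lra)) as [k [_ Hk]].
  pose proof (tt_pos k).
  exists (tt k / 8). split; [|split].
  - apply Rle_lt_trans with (eps/2); [|lra]. apply dH_le; simpl.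
    + intros x Hx. destruct (HF3 x Hx) as [q [Hq Hdq]]. exists q. split; auto. lra.
    + intros y Hy. exists y. split; auto. rewrite dist_refl. lra.
  - lra.
  - intros z Hz Hn. apply dH_lt in Hz. destruct Hz as [Hz1 Hz2]. simpl in Hz1, Hz2.
    apply (Hn k F). apply near_good with d (tt k / 8); auto; lra.
Qed.

Lemma nd_N (Hp : perfect_space X) k : nowhere_dense_d (KX X) (dH X) (NN k).
Proof.
  apply nd_crit. intros K0 eps Heps. set (s := tt k). assert (Hs : 0 < s) by apply tt_pos.
  destruct (classic (exists y : KX X, dH X K0 y < eps /\ exists l, Good X (KS y) s l)) as [[y [Hy [l Hl]]]|Hno].
  2:{ exists K0, eps. split. pose proof (dH_refl X K0). lra. split; auto.
      intros z Hz [l [Hl _]]. apply Hno. exists z. split; eauto. }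
  set (a := dH X K0 y).
  set (rho := Rmin ((eps - a)/2) (s/100)).
  assert (Hrho : 0 < rho) by (apply Rmin_pos; unfold a; lra).
  assert (Hrho1 : rho <= (eps - a)/2) by apply Rmin_l.
  assert (Hrho2 : rho <= s/100) by apply Rmin_r.
  destruct (build X Hp (KS y) s l rho (KS_cpt X y) Hl Hs Hrho Hrho2) as [F [m [HF1 [Hm [HF2 [HF3 [HF4 HF5]]]]]]].
  destruct (KS_ne X y) as [y0 Hy0]. destruct (HF4 y0 Hy0) as [p [Hp0 _]].
  exists (mkKX X F p Hp0).
  destruct (min_sep X F) as [d [Hd Hsep]].
  destruct (tt_small (d/2) k ltac:(lra)) as [k' [Hkk Hk']].
  pose proof (tt_pos k'). pose proof (tt_lt k k' Hkk). fold s in H0.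
  exists (tt k' / 8). split; [|split].
  - set (a' := a + (eps - a)/4).
    assert (Ha' : a < a') by (unfold a'; unfold a in *; lra).
    destruct (dH_lt X K0 y a' Ha') as [Ha1 Ha2].
    apply Rle_lt_trans with (a' + rho); [|unfold a'; lra]. apply dH_le; simpl.
    + intros x Hx. destruct (Ha1 x Hx) as [w [Hw Hdw]]. destruct (HF4 w Hw) as [q [Hq Hdq]].
      exists q. split; auto. pose proof (dist_tri X q w x). lra.
    + intros q Hq. destruct (HF5 q Hq) as [w [Hw Hdw]]. destruct (Ha2 w Hw) as [x [Hx Hdx]].
      exists x. split; auto. pose proof (dist_tri X x w q). lra.
  - lra.
  - intros z Hz [lz [Hlz Hn]]. apply dH_lt in Hz. destruct Hz as [Hz1 Hz2]. simpl in Hz1, Hz2.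
    apply Hn. exists k', F, m. split; auto. split; auto. split.
    + apply near_good with d (tt k' / 8); auto; lra.
    + intros c Hc. destruct Hlz as [_ [_ [Hlz3 _]]].
      destruct (Hlz3 c Hc) as [x [Hx Hdx]]. destruct (Hz2 x Hx) as [q0 [Hq0 Hdq0]].
      destruct (HF2 q0 Hq0) as [c0 [Hc0 Hdc0]]. unfold s in *.
      assert (Hcc0 : dist c0 c < tt k/4 + 2*rho + tt k'/8).
      { pose proof (dist_tri X c0 q0 c). pose proof (dist_tri X q0 x c).
        rewrite (dist_sym X c0 q0) in H1. lra. }
      rewrite <- (HF3 c0 Hc0). f_equal. apply filter_ext_in.
      intros q Hq. destruct (HF2 q Hq) as [cq [Hcq Hdcq]].
      destruct Hl as [_ [_ [_ Hsep']]].
      destruct (Xdec X cq c0) as [->|Hne].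
      * transitivity true; [|symmetry]; apply nearb_true.
        -- pose proof (dist_tri X q c0 c). lra.
        -- lra.
      * specialize (Hsep' cq c0 Hcq Hc0 Hne).
        transitivity false; [|symmetry]; apply nearb_false.
        -- pose proof (dist_tri X cq q c0). pose proof (dist_tri X q c c0).
           rewrite (dist_sym X cq q) in H1. rewrite (dist_sym X c c0) in H2. lra.
        -- pose proof (dist_tri X cq q c0). rewrite (dist_sym X cq q) in H1. lra.
Qed.

End Meager.

Lemma list_sum_const {A} (l : list A) k : list_sum (map (fun _ => k) l) = (length l * k)%nat.
Proof. induction l; simpl; lia. Qed.

Lemma list_sum_zero {A} (l : list A) (f : A -> nat) : (forall a, In a l -> f a = 0%nat) -> list_sum (map f l) = 0%nat.
Proof. induction l as [|a l IH]; simpl; intros H; auto. rewrite H, IH; auto. Qed.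

Lemma list_sum_plus {A} (l : list A) (f g : A -> nat) :
  list_sum (map (fun a => f a + g a)%nat l) = (list_sum (map f l) + list_sum (map g l))%nat.
Proof. induction l as [|a l IH]; simpl; lia. Qed.

Lemma sum_ind {A} (l : list A) (f : A -> bool) (P' : A -> bool) (pb : bool) :
  length (filter f l) = 1%nat -> (forall a, In a l -> f a = true -> P' a = pb) ->
  list_sum (map (fun a => if f a then 1%nat else 0%nat) (filter P' l)) = if pb then 1%nat else 0%nat.
Proof.
  induction l as [|a l IH]; simpl; intros H1 H2. discriminate.
  destruct (f a) eqn:Ef.
  - simpl in H1. injection H1 as H1.
    assert (Hz : forall b, In b l -> f b = false).
    { intros b Hb. destruct (f b) eqn:E; auto. exfalso.
      assert (In b (filter f l)) by (apply filter_In; auto). destruct (filter f l); [destruct H|discriminate]. }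
    rewrite (H2 a (or_introl eq_refl) Ef). destruct pb; simpl; try rewrite Ef.
    + rewrite list_sum_zero; auto. intros b Hb. apply filter_In in Hb. rewrite Hz; tauto.
    + rewrite list_sum_zero; auto. intros b Hb. apply filter_In in Hb. rewrite Hz; tauto.
  - destruct (P' a); simpl; [rewrite Ef; simpl|]; apply IH; auto.
Qed.

Lemma partition {A} (l l'' : list A) (near : A -> A -> bool) (P P' : A -> bool) :
  (forall b, In b l'' -> length (filter (fun a => near a b) l) = 1%nat) ->
  (forall a b, In a l -> In b l'' -> near a b = true -> P b = P' a) ->
  length (filter P l'') = list_sum (map (fun a => length (filter (near a) l'')) (filter P' l)).
Proof.
  induction l'' as [|b l'' IH]; intros H1 H2.
  - simpl. rewrite list_sum_zero; auto.
  - simpl.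
    rewrite (map_ext (fun a => length (if near a b then b :: filter (near a) l'' else filter (near a) l''))
      (fun a => ((if near a b then 1 else 0) + length (filter (near a) l''))%nat)).
    2:{ intro a. destruct (near a b); reflexivity. }
    rewrite list_sum_plus. rewrite <- IH.
    + rewrite (sum_ind l (fun a => near a b) P' (P b)).
      * destruct (P b); reflexivity.
      * apply H1; left; auto.
      * intros a Ha Hn. symmetry. apply H2; auto. left; auto.
    + intros b' Hb'. apply H1; right; auto.
    + intros a b' Ha Hb' Hn. apply H2; auto. right; auto.
Qed.

Section Analysis.
Variable X : MetricSpace.
Variable K : KX X.
Variable Hstart : exists k l, Good X (KS K) (tt k) l.
Variable Hstep : forall k l, Good X (KS K) (tt k) l ->
  exists k' l' m, (k < k')%nat /\ (2 <= m)%nat /\ Good X (KS K) (tt k') l' /\ Qc X (tt k) l l' m.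

Definition Spec (st : nat * list X) (r : nat * list X * nat) : Prop :=
  (fst st < fst (fst r))%nat /\ (2 <= snd r)%nat /\ Good X (KS K) (tt (fst (fst r))) (snd (fst r)) /\
  Qc X (tt (fst st)) (snd st) (snd (fst r)) (snd r).

Lemma step_ex (st : nat * list X) : exists r, Good X (KS K) (tt (fst st)) (snd st) -> Spec st r.
Proof.
  destruct (classic (Good X (KS K) (tt (fst st)) (snd st))) as [H|H].
  - destruct (Hstep _ _ H) as [k' [l' [m Hs]]]. exists (k', l', m). intros _. exact Hs.
  - exists (0%nat, nil, 0%nat). intro; contradiction.
Qed.

Definition stepF (st : nat * list X) : nat * list X * nat :=
  proj1_sig (constructive_indefinite_description _ (step_ex st)).

Lemma start_ex : exists st : nat * list X, Good X (KS K) (tt (fst st)) (snd st).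
Proof. destruct Hstart as [k [l H]]. exists (k, l). exact H. Qed.

Definition st0 : nat * list X := proj1_sig (constructive_indefinite_description _ start_ex).

Fixpoint seqS (n : nat) : nat * list X :=
  match n with O => st0 | S n => fst (stepF (seqS n)) end.

Definition kk n := fst (seqS n).
Definition L n := snd (seqS n).
Definition T n := tt (kk n).
Definition mm n := snd (stepF (seqS n)).

Lemma seq_good_spec n : Good X (KS K) (T n) (L n) /\ Spec (seqS n) (stepF (seqS n)).
Proof.
  induction n as [|n [IH1 IH2]].
  - assert (H : Good X (KS K) (T 0) (L 0)) by exact (proj2_sig (constructive_indefinite_description _ start_ex)).
    split; auto. exact (proj2_sig (constructive_indefinite_description _ (step_ex (seqS 0))) H).
  - assert (H : Good X (KS K) (T (S n)) (L (S n))) by exact (proj1 (proj2 (proj2 IH2))).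
    split; auto. exact (proj2_sig (constructive_indefinite_description _ (step_ex (seqS (S n)))) H).
Qed.

Lemma seq_good n : Good X (KS K) (T n) (L n).
Proof. apply seq_good_spec. Qed.

Lemma kk_S n : (kk n < kk (S n))%nat.
Proof. apply (seq_good_spec n). Qed.

Lemma mm_ge2 n : (2 <= mm n)%nat.
Proof. apply (seq_good_spec n). Qed.

Lemma seq_Qc n : Qc X (T n) (L n) (L (S n)) (mm n).
Proof. apply (seq_good_spec n). Qed.

Lemma T_pos n : 0 < T n.
Proof. apply tt_pos. Qed.

Lemma T_S n : T (S n) <= T n / 2.
Proof. apply tt_lt, kk_S. Qed.

Lemma T_anti n N : (n <= N)%nat -> T N <= T n.
Proof. induction 1. lra. pose proof (T_S m). pose proof (T_pos m). lra. Qed.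

Lemma kk_ge n : (n <= kk n)%nat.
Proof. induction n. lia. pose proof (kk_S n). lia. Qed.

Lemma T_small a : 0 < a -> exists n, T n < a.
Proof.
  intro Ha. destruct (tt_small a 0 Ha) as [k [_ Hk]]. exists k.
  pose proof (tt_anti k (kk k) (kk_ge k)). unfold T. lra.
Qed.

Lemma parent_unique N b : In b (L (S N)) -> length (filter (fun a => nearb X (T N) a b) (L N)) = 1%nat.
Proof.
  intro Hb. destruct (seq_good (S N)) as [_ [_ [H3 _]]]. destruct (H3 b Hb) as [x [Hx Hdx]].
  pose proof (T_S N). pose proof (T_pos (S N)).
  destruct (center_char X (KS K) (T N) (L N) x b (seq_good N) (T_pos N) Hx ltac:(lra)) as [c0 [Hc0 [_ Hch]]].
  apply count_one with c0; [apply (seq_good N)|auto|intros q Hq; apply Hch; auto].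
Qed.

Lemma anc_compat n N a b : (n <= N)%nat -> In a (L N) -> In b (L (S N)) -> nearb X (T N) a b = true ->
  forall c, In c (L n) -> nearb X (T n) c b = nearb X (T n) c a.
Proof.
  intros HnN Ha Hb Hab c Hc. apply nearb_true in Hab.
  destruct (seq_good (S N)) as [_ [_ [H3 _]]]. destruct (H3 b Hb) as [x [Hx Hdx]].
  destruct (seq_good N) as [_ [_ [H3' _]]]. destruct (H3' a Ha) as [x' [Hx' Hdx']].
  pose proof (T_S N). pose proof (T_pos (S N)). pose proof (T_anti n N HnN). pose proof (T_pos N).
  destruct (center_char X (KS K) (T n) (L n) x b (seq_good n) (T_pos n) Hx ltac:(lra)) as [c0 [Hc0 [Hd0 Hch]]].
  destruct (center_char X (KS K) (T n) (L n) x' a (seq_good n) (T_pos n) Hx' ltac:(lra)) as [c1 [Hc1 [Hd1 Hch']]].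
  assert (c0 = c1).
  { apply (same_center X (KS K) (T n) (L n) x x'); auto. apply seq_good. apply T_pos.
    pose proof (dist_tri X x b x'). pose proof (dist_tri X b a x'). rewrite (dist_sym X a x') in H5.
    lra. }
  subst c1. destruct (nearb X (T n) c b) eqn:E1; destruct (nearb X (T n) c a) eqn:E2; auto.
  - apply Hch in E1; auto. subst. rewrite <- E2. symmetry. apply Hch'; auto.
  - apply Hch' in E2; auto. subst. rewrite <- E1. apply Hch; auto.
Qed.

Fixpoint Pd (n d : nat) : nat := match d with O => 1%nat | S d => (Pd n d * mm (n + d))%nat end.

Lemma desc_count n d c : In c (L n) -> length (filter (nearb X (T n) c) (L (n + d))) = Pd n d.
Proof.
  intro Hc. induction d as [|d IH].
  - rewrite Nat.add_0_r. simpl. apply count_one with c; auto. apply seq_good.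
    intros q Hq. rewrite nearb_true. split.
    + intro H. apply NNPP; intro Hne. destruct (seq_good n) as [_ [_ [_ H4]]].
      specialize (H4 q c Hq Hc Hne). pose proof (T_pos n). lra.
    + intros ->. rewrite dist_refl. pose proof (T_pos n). lra.
  - replace (n + S d)%nat with (S (n + d)) by lia.
    rewrite (partition (L (n + d)) (L (S (n + d))) (nearb X (T (n + d))) (nearb X (T n) c) (nearb X (T n) c)).
    + rewrite (map_ext_in _ (fun _ => mm (n + d))).
      * rewrite list_sum_const, IH. simpl. reflexivity.
      * intros a Ha. apply filter_In in Ha. apply (seq_Qc (n + d)). tauto.
    + intros b Hb. apply parent_unique; auto.
    + intros a b Ha Hb Hab. apply (anc_compat n (n + d)); auto. lia.
Qed.

Lemma len_rel n d : length (L (n + d)) = (length (L n) * Pd n d)%nat.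
Proof.
  induction d as [|d IH].
  - rewrite Nat.add_0_r. simpl. lia.
  - replace (n + S d)%nat with (S (n + d)) by lia.
    rewrite <- (filter_true (L (S (n + d)))).
    rewrite (partition (L (n + d)) (L (S (n + d))) (nearb X (T (n + d))) (fun _ => true) (fun _ => true)).
    + rewrite filter_true. rewrite (map_ext_in _ (fun _ => mm (n + d))).
      * rewrite list_sum_const, IH. simpl. lia.
      * intros a Ha. apply (seq_Qc (n + d)). auto.
    + intros b Hb. apply parent_unique; auto.
    + auto.
Qed.


Definition M n := length (L n).

Lemma L_ne n : exists c, In c (L n).
Proof.
  destruct (KS_ne X K) as [x Hx]. destruct (seq_good n) as [_ [H2 _]].
  destruct (H2 x Hx) as [c [Hc _]]. eauto.
Qed.

Lemma M_pos n : (1 <= M n)%nat.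
Proof. destruct (L_ne n) as [c Hc]. unfold M. destruct (L n). destruct Hc. simpl. lia. Qed.

Lemma M_S n : M (S n) = (M n * mm n)%nat.
Proof. unfold M. pose proof (len_rel n 1). replace (n + 1)%nat with (S n) in H by lia. rewrite H. simpl. rewrite !Nat.add_0_r. reflexivity. Qed.

Lemma M_ge n : (n + 1 <= M n)%nat.
Proof. induction n. apply M_pos. rewrite M_S. pose proof (mm_ge2 n). nia. Qed.

Lemma M_mono n N : (n <= N)%nat -> (M n <= M N)%nat.
Proof. induction 1. lia. rewrite M_S. pose proof (mm_ge2 m). nia. Qed.

Definition w n := / INR (M n).

Lemma INR_M_pos n : 0 < INR (M n).
Proof. apply lt_0_INR. pose proof (M_pos n). lia. Qed.

Lemma w_pos n : 0 < w n.
Proof. apply Rinv_0_lt_compat, INR_M_pos. Qed.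

Lemma w_le1 n : w n <= 1.
Proof. unfold w. rewrite <- Rinv_1. apply Rinv_le_contravar. lra. apply (le_INR 1). apply M_pos. Qed.

Lemma w_anti n N : (n <= N)%nat -> w N <= w n.
Proof. intro H. unfold w. apply Rinv_le_contravar. apply INR_M_pos. apply le_INR, M_mono, H. Qed.

Lemma w_small e : 0 < e -> exists n, w n < e.
Proof.
  intro He. destruct (archimed_cor1 e He) as [N [HN HN0]].
  exists N. unfold w. eapply Rle_lt_trans; [|exact HN].
  apply Rinv_le_contravar. apply lt_0_INR; lia. apply le_INR. pose proof (M_ge N). lia.
Qed.

Lemma w_ratio n d : INR (Pd n d) * w (n + d) = w n.
Proof.
  unfold w, M. rewrite len_rel. rewrite mult_INR.
  assert (0 < INR (length (L n))) by apply INR_M_pos.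
  assert (0 < INR (Pd n d)).
  { pose proof (INR_M_pos (n + d)). unfold M in H0. rewrite len_rel, mult_INR in H0.
    destruct (Rle_or_lt (INR (Pd n d)) 0); auto. pose proof (pos_INR (Pd n d)).
    assert (INR (Pd n d) = 0) by lra. rewrite H3 in H0. lra. }
  field. split; lra.
Qed.

Definition clamp (u : R) : R := Rmax 0 (Rmin 1 u).

Lemma clamp_bnd u : 0 <= clamp u <= 1.
Proof. unfold clamp. split. apply Rmax_l. apply Rmax_lub. lra. apply Rmin_l. Qed.

Lemma clamp_0 u : u <= 0 -> clamp u = 0.
Proof. intro. unfold clamp. rewrite Rmin_right by lra. rewrite Rmax_left; lra. Qed.

Lemma clamp_1 u : 1 <= u -> clamp u = 1.
Proof. intro. unfold clamp. rewrite Rmin_left by lra. rewrite Rmax_right; lra. Qed.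

Lemma clamp_mono u v : u <= v -> clamp u <= clamp v.
Proof. intro. unfold clamp. apply Rle_max_compat_l. apply Rle_min_compat_l. auto. Qed.

Lemma clamp_lip u v : clamp v <= clamp u + Rabs (v - u).
Proof.
  unfold clamp, Rabs. destruct (Rcase_abs (v - u)); unfold Rmax, Rmin;
  destruct (Rle_dec 1 u); destruct (Rle_dec 1 v);
  repeat match goal with |- context [Rle_dec ?a ?b] => destruct (Rle_dec a b) end; lra.
Qed.

Definition phi m x := w m * clamp (2 * x / T (S m) - 1).

Definition hh x := Rsup (fun v => exists m, v = phi m x).

Lemma phi_bnd m x : 0 <= phi m x <= w m.
Proof. unfold phi. pose proof (clamp_bnd (2 * x / T (S m) - 1)). pose proof (w_pos m). split; nra. Qed.

Lemma hh_bound x : bound (fun v => exists m, v = phi m x).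
Proof. exists 1. intros v [m ->]. pose proof (phi_bnd m x). pose proof (w_le1 m). lra. Qed.

Lemma phi_le_hh m x : phi m x <= hh x.
Proof. apply Rsup_ub. apply hh_bound. eauto. Qed.

Lemma hh_le x b : (forall m, phi m x <= b) -> hh x <= b.
Proof. intro H. apply Rsup_le. exists (phi 0 x). eauto. intros v [m ->]. auto. Qed.

Lemma hh_nonneg x : 0 <= hh x.
Proof. pose proof (phi_le_hh 0 x). pose proof (phi_bnd 0 x). lra. Qed.

Lemma arg_le0 t x : 0 < t -> 2 * x <= t -> 2 * x / t - 1 <= 0.
Proof. intros Ht H. assert (2 * x / t <= 1); [|lra]. unfold Rdiv. pose proof (Rinv_r t). pose proof (Rinv_0_lt_compat t Ht). nra. Qed.

Lemma arg_ge1 t x : 0 < t -> t <= x -> 1 <= 2 * x / t - 1.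
Proof. intros Ht H. assert (2 <= 2 * x / t); [|lra]. unfold Rdiv. pose proof (Rinv_r t). pose proof (Rinv_0_lt_compat t Ht). nra. Qed.

Lemma arg_mono t x y : 0 < t -> x <= y -> 2 * x / t - 1 <= 2 * y / t - 1.
Proof. intros Ht H. unfold Rdiv. pose proof (Rinv_0_lt_compat t Ht). nra. Qed.

Lemma arg_diff t x y : 0 < t -> Rabs ((2 * y / t - 1) - (2 * x / t - 1)) = 2 / t * Rabs (y - x).
Proof.
  intro Ht. replace ((2 * y / t - 1) - (2 * x / t - 1)) with (2 / t * (y - x)) by (field; lra).
  rewrite Rabs_mult. rewrite (Rabs_pos_eq (2/t)). auto. unfold Rdiv. pose proof (Rinv_0_lt_compat t Ht). lra.
Qed.

Lemma hh_mono x y : x <= y -> hh x <= hh y.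
Proof.
  intro H. apply hh_le. intro m. eapply Rle_trans; [|apply phi_le_hh].
  unfold phi. apply Rmult_le_compat_l. left; apply w_pos. apply clamp_mono, arg_mono; auto. apply T_pos.
Qed.

Lemma hh_ge_w n d : T (S n) <= d -> w n <= hh d.
Proof.
  intro H. eapply Rle_trans; [|apply (phi_le_hh n)]. unfold phi.
  rewrite clamp_1. lra. apply arg_ge1; auto. apply T_pos.
Qed.

Lemma hh_le_w n : hh (T n / 4) <= w n.
Proof.
  apply hh_le. intro m. destruct (le_lt_dec n m) as [Hle|Hlt].
  - pose proof (phi_bnd m (T n / 4)). pose proof (w_anti n m Hle). lra.
  - unfold phi. rewrite clamp_0. pose proof (w_pos n). lra.
    apply arg_le0. apply T_pos. pose proof (T_anti (S m) n Hlt). pose proof (T_pos n). lra.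
Qed.

Lemma hh_0 : hh 0 = 0.
Proof.
  apply Rle_antisym; [|apply hh_nonneg]. apply hh_le. intro m. unfold phi.
  rewrite clamp_0. lra. apply arg_le0. apply T_pos. pose proof (T_pos (S m)). lra.
Qed.

Lemma hh_pos x : 0 < x -> 0 < hh x.
Proof.
  intro Hx. destruct (T_small x Hx) as [n Hn]. destruct n as [|n].
  - pose proof (hh_ge_w 0 x). pose proof (T_S 0). pose proof (T_pos 0). pose proof (w_pos 0). lra.
  - pose proof (hh_ge_w n x ltac:(lra)). pose proof (w_pos n). lra.
Qed.

Lemma hh_lip x0 N x y : T (S N) <= x0 / 2 -> x0 / 2 <= x -> x0 / 2 <= y ->
  hh y <= hh x + 2 / T (S N) * Rabs (y - x).
Proof.
  intros HN Hx Hy. apply hh_le. intro m. destruct (le_lt_dec m N) as [Hle|Hlt].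
  - unfold phi at 1. pose proof (clamp_lip (2 * x / T (S m) - 1) (2 * y / T (S m) - 1)).
    rewrite arg_diff in H by apply T_pos.
    pose proof (phi_le_hh m x). unfold phi in H0.
    pose proof (w_pos m). pose proof (w_le1 m).
    assert (2 / T (S m) <= 2 / T (S N)).
    { unfold Rdiv. apply Rmult_le_compat_l. lra. apply Rinv_le_contravar. apply T_pos. apply T_anti. lia. }
    pose proof (Rabs_pos (y - x)).
    assert (0 <= 2 / T (S m)). { unfold Rdiv. pose proof (Rinv_0_lt_compat _ (T_pos (S m))). lra. }
    pose proof (clamp_bnd (2 * y / T (S m) - 1)).
    assert (w m * clamp (2 * y / T (S m) - 1) <= w m * clamp (2 * x / T (S m) - 1) + w m * (2 / T (S m) * Rabs (y - x))) by nra.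
    assert (w m * (2 / T (S m) * Rabs (y - x)) <= 2 / T (S N) * Rabs (y - x)).
    { assert (0 <= 2 / T (S m) * Rabs (y - x)) by (apply Rmult_le_pos; auto).
      assert (2 / T (S m) * Rabs (y - x) <= 2 / T (S N) * Rabs (y - x)) by (apply Rmult_le_compat_r; auto).
      nra. }
    lra.
  - pose proof (phi_bnd m y). pose proof (w_anti N m ltac:(lia)).
    pose proof (hh_ge_w N x ltac:(lra)). pose proof (Rabs_pos (y - x)).
    assert (0 <= 2 / T (S N)). { unfold Rdiv. pose proof (Rinv_0_lt_compat _ (T_pos (S N))). lra. }
    nra.
Qed.

Lemma hh_cont : continuous_nonneg hh.
Proof.
  intros x Hx e He. destruct Hx as [Hx|Hx].
  - destruct (T_small (x / 2) ltac:(lra)) as [N HN].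
    pose proof (T_S N). pose proof (T_pos (S N)). pose proof (T_pos N).
    set (Lc := 2 / T (S N)).
    assert (HL : 0 < Lc). { unfold Lc, Rdiv. pose proof (Rinv_0_lt_compat _ H0). lra. }
    exists (Rmin (x / 2) (e / (2 * Lc))). split. apply Rmin_pos. lra. apply Rdiv_lt_0_compat; lra.
    intros y Hy Hd. pose proof (Rmin_l (x/2) (e / (2 * Lc))) as Hm1. pose proof (Rmin_r (x/2) (e / (2 * Lc))) as Hm2.
    assert (Hy2 : x / 2 <= y). { apply Rabs_def2 in Hd. lra. }
    pose proof (hh_lip x N x y ltac:(lra) ltac:(lra) Hy2) as L1.
    pose proof (hh_lip x N y x ltac:(lra) Hy2 ltac:(lra)) as L2.
    fold Lc in L1, L2. rewrite Rabs_minus_sym in L2.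
    assert (Lc * Rabs (y - x) < e).
    { assert (Hr : Rabs (y - x) < e / (2 * Lc)) by lra.
      apply Rmult_lt_compat_l with (r := Lc) in Hr; auto.
      replace (Lc * (e / (2 * Lc))) with (e / 2) in Hr by (field; lra). lra. }
    apply Rabs_def1; lra.
  - subst x. destruct (w_small e He) as [m Hm].
    exists (T (S m) / 2). split. pose proof (T_pos (S m)). lra.
    intros y Hy Hd. rewrite hh_0. rewrite Rminus_0_r in *. rewrite Rabs_pos_eq in Hd by auto.
    rewrite Rabs_pos_eq by apply hh_nonneg.
    assert (hh y <= w m); [|lra].
    apply hh_le. intro j. destruct (le_lt_dec j m) as [Hle|Hlt].
    + unfold phi. rewrite clamp_0. pose proof (w_pos m). lra.
      apply arg_le0. apply T_pos. pose proof (T_anti (S j) (S m) ltac:(lia)). lra.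
    + pose proof (phi_bnd j y). pose proof (w_anti m j ltac:(lia)). lra.
Qed.

Lemma hh_gauge : gauge hh.
Proof.
  split; [|split; [|split]].
  - intros x _. apply hh_nonneg.
  - intros x y _ H. apply hh_mono, H.
  - intros x Hx e He. destruct (hh_cont x Hx e He) as [d [Hd H]]. exists d. split; auto.
    intros y Hy. apply H. lra. rewrite Rabs_pos_eq; lra.
  - intros x Hx. split.
    + intro H. destruct Hx as [Hx|Hx]; auto. pose proof (hh_pos x Hx). lra.
    + intros ->. apply hh_0.
Qed.

Lemma ER_psum_fin (f : nat -> ER) (a : nat -> R) n : (forall i, f i = Fin (a i)) -> ER_psum f n = Fin (sum_f_R0 a n).
Proof. intro H. induction n; simpl. apply H. rewrite IHn, H. reflexivity. Qed.

Lemma ER_series_le (f : nat -> ER) (a : nat -> R) B : (forall i, f i = Fin (a i)) ->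
  (forall n, sum_f_R0 a n <= B) -> exists v, ER_series f = Fin v /\ v <= B.
Proof.
  intros Hf HB. unfold ER_series, ER_sup.
  destruct (excluded_middle_informative _) as [[H|H]|H].
  - destruct H as [n Hn]. rewrite (ER_psum_fin f a n Hf) in Hn. discriminate.
  - exfalso. apply H. exists B. intros r [n Hn]. rewrite (ER_psum_fin f a n Hf) in Hn. injection Hn as ->. auto.
  - eexists. split. reflexivity. apply Rsup_le. exists (sum_f_R0 a 0). exists 0%nat. rewrite (ER_psum_fin f a 0 Hf). auto.
    intros r [n Hn]. rewrite (ER_psum_fin f a n Hf) in Hn. injection Hn as ->. auto.
Qed.

Lemma ER_series_ge (f : nat -> ER) (a : nat -> R) v : (forall i, f i = Fin (a i)) ->
  ER_series f = Fin v -> forall n, sum_f_R0 a n <= v.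
Proof.
  intros Hf Hv n. unfold ER_series, ER_sup in Hv.
  destruct (excluded_middle_informative _) as [H|H]. discriminate.
  injection Hv as <-. apply Rsup_ub.
  - apply NNPP. intro Hb. apply H. right. exact Hb.
  - exists n. rewrite (ER_psum_fin f a n Hf). reflexivity.
Qed.

Lemma sum_ge_term (g : nat -> R) n i : (forall j, 0 <= g j) -> (i <= n)%nat -> g i <= sum_f_R0 g n.
Proof.
  intros Hg. induction n; intro Hi.
  - replace i with 0%nat by lia. simpl. lra.
  - simpl. destruct (Nat.eq_dec i (S n)) as [->|Hne]. pose proof (cond_pos_sum g n Hg). lra.
    pose proof (IHn ltac:(lia)). pose proof (Hg (S n)). lra.
Qed.

Lemma count_cover {A} (l : list A) (P : nat -> A -> bool) n :
  (forall b, In b l -> exists i, (i <= n)%nat /\ P i b = true) ->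
  INR (length l) <= sum_f_R0 (fun i => INR (length (filter (P i) l))) n.
Proof.
  induction l as [|b l IH]; intro H.
  - change (INR (length (@nil A))) with 0. apply cond_pos_sum. intros. apply pos_INR.
  - rewrite (sum_eq _ (fun i => INR (length (filter (P i) l)) + (if P i b then 1 else 0))).
    + rewrite plus_sum. simpl length. rewrite S_INR.
      assert (H1 : INR (length l) <= sum_f_R0 (fun i => INR (length (filter (P i) l))) n).
      { apply IH. intros b' Hb'. apply H. right; auto. }
      destruct (H b (or_introl eq_refl)) as [i0 [Hi0 Hp]].
      pose proof (sum_ge_term (fun i => if P i b then 1 else 0) n i0 ltac:(intro j; cbv beta; destruct (P j b); lra) Hi0).
      simpl in H0. rewrite Hp in H0. lra.
    + intros i _. simpl. destruct (P i b); simpl length; try rewrite S_INR; lra.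
Qed.

Lemma geo_sum n : sum_f_R0 (fun i => (/2)^(S i)) n = 1 - (/2)^(S n).
Proof.
  induction n. simpl. lra.
  replace (sum_f_R0 (fun i => (/2)^(S i)) (S n)) with (sum_f_R0 (fun i => (/2)^(S i)) n + (/2)^(S (S n))) by reflexivity.
  rewrite IHn. simpl. lra.
Qed.

Lemma least_ex (P : nat -> Prop) : (exists n, P n) -> exists n, P n /\ forall m, (m < n)%nat -> ~ P m.
Proof.
  intros [n Hn]. apply NNPP. intro Hno.
  assert (forall k, forall m, (m <= k)%nat -> ~ P m).
  { induction k; intros m Hm Hp.
    - apply Hno. exists m. split; auto. intros. lia.
    - destruct (Nat.eq_dec m (S k)) as [->|Hne]; [|apply (IHk m); auto; lia].
      apply Hno. exists (S k). split; auto. intros m' Hm'. apply IHk. lia. }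
  apply (H n n); auto.
Qed.

Lemma diam_le (A : X -> Prop) r : 0 <= r -> (forall x y, A x -> A y -> dist x y <= r) ->
  exists d, diam X A = Fin d /\ d <= r.
Proof.
  intros Hr H. unfold diam. destruct (excluded_middle_informative _) as [[x0 Hx0]|Hn].
  - destruct (excluded_middle_informative _) as [Hb|Hb].
    + eexists; split; [reflexivity|]. apply Rsup_le. exists (dist x0 x0). exists x0, x0. auto.
      intros v [x [y [Hx [Hy ->]]]]. auto.
    + exfalso. apply Hb. exists r. intros v [x [y [Hx [Hy ->]]]]. auto.
  - exists 0. split; auto.
Qed.

Lemma diam_pair (A : X -> Prop) d x y : diam X A = Fin d -> A x -> A y -> dist x y <= d.
Proof.
  intros Hd Hx Hy. unfold diam in Hd. destruct (excluded_middle_informative _) as [Hne|Hn].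
  - destruct (excluded_middle_informative _) as [Hb|Hb]; [|discriminate].
    injection Hd as <-. apply Rsup_ub; auto. exists x, y. auto.
  - exfalso. apply Hn. eauto.
Qed.

Definition CS (delta : R) : ER -> Prop := fun v => exists C : nat -> X -> Prop,
  (forall x, KS K x -> exists i, C i x) /\
  (forall i, ER_le (diam X (C i)) (Fin delta)) /\
  v = ER_series (fun i => ER_app hh (diam X (C i))).

Definition ddC (C : nat -> X -> Prop) i : R := match diam X (C i) with Fin d => d | PInf => 0 end.

Lemma terms_fin (C : nat -> X -> Prop) delta : (forall i, ER_le (diam X (C i)) (Fin delta)) ->
  forall i, ER_app hh (diam X (C i)) = Fin (hh (ddC C i)) /\ diam X (C i) = Fin (ddC C i) /\ ddC C i <= delta.
Proof.
  intros H i. specialize (H i). unfold ddC. destruct (diam X (C i)); simpl in *; auto. contradiction.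
Qed.

Lemma CS_nonneg delta r : CS delta (Fin r) -> 0 <= r.
Proof.
  intros [C [_ [Hd Hv]]]. symmetry in Hv.
  pose proof (ER_series_ge _ (fun i => hh (ddC C i)) r (fun i => proj1 (terms_fin C delta Hd i)) Hv 0%nat).
  simpl in H. pose proof (hh_nonneg (ddC C 0)). lra.
Qed.

Lemma sum_ind_w n k : sum_f_R0 (fun i => if lt_dec i (M n) then w n else 0) k = INR (min (S k) (M n)) * w n.
Proof.
  pose proof (M_pos n). induction k.
  - change (sum_f_R0 ?f 0) with (f 0%nat). cbv beta. destruct (lt_dec 0 (M n)); [|lia].
    replace (min 1 (M n)) with 1%nat by lia. change (INR 1) with 1. lra.
  - change (sum_f_R0 ?f (S k)) with (sum_f_R0 f k + f (S k)). rewrite IHk. cbv beta. destruct (lt_dec (S k) (M n)).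
    + replace (min (S k) (M n)) with (S k) by lia. replace (min (S (S k)) (M n)) with (S (S k)) by lia.
      rewrite (S_INR (S k)). lra.
    + replace (min (S k) (M n)) with (M n) by lia. replace (min (S (S k)) (M n)) with (M n) by lia. lra.
Qed.

Lemma Hd_upper delta : 0 < delta -> exists v, Hh_delta X hh delta (KS K) = Fin v /\ v <= 1.
Proof.
  intro Hdel. destruct (T_small (4 * delta) ltac:(lra)) as [n Hn].
  destruct (KS_ne X K) as [x0 Hx0].
  pose (C := fun i => if lt_dec i (M n) then (fun x => KS K x /\ dist x (nth i (L n) x0) < T n / 8) else (fun _ : X => False)).
  pose proof (T_pos n).
  assert (HC : forall i, exists d, diam X (C i) = Fin d /\ d <= T n / 4 /\ hh d <= (if lt_dec i (M n) then w n else 0)).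
  { intro i. unfold C. destruct (lt_dec i (M n)).
    - destruct (diam_le (fun x => KS K x /\ dist x (nth i (L n) x0) < T n / 8) (T n / 4)) as [d [Hd Hdr]].
      lra. intros x y [_ Hx] [_ Hy]. pose proof (dist_tri X x (nth i (L n) x0) y).
      rewrite (dist_sym X (nth i (L n) x0) y) in H0. lra.
      exists d. split; auto. split; auto. eapply Rle_trans. apply hh_mono, Hdr. apply hh_le_w.
    - destruct (diam_le (fun _ : X => False) 0) as [d [Hd Hdr]]. lra. intros x y [].
      exists d. split; auto. assert (Hd0 : d = 0).
      { unfold diam in Hd. destruct (excluded_middle_informative _) as [[x Hx]|]. destruct Hx. injection Hd; auto. }
      subst d. split. lra. rewrite hh_0. lra. }
  assert (HCd : forall i, ER_le (diam X (C i)) (Fin delta)).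
  { intro i. destruct (HC i) as [d [Hd [Hdr _]]]. rewrite Hd. simpl. lra. }
  assert (Hcov : forall x, KS K x -> exists i, C i x).
  { intros x Hx. destruct (seq_good n) as [_ [H2 _]]. destruct (H2 x Hx) as [c [Hc Hdc]].
    destruct (In_nth (L n) c x0 Hc) as [i [Hi Hic]]. exists i. unfold C.
    destruct (lt_dec i (M n)) as [_|Hn']; [|unfold M in Hn'; lia]. rewrite Hic. auto. }
  destruct (ER_series_le (fun i => ER_app hh (diam X (C i))) (fun i => hh (ddC C i)) 1) as [v [Hv Hv1]].
  - intro i. apply (terms_fin C delta HCd i).
  - intro k. eapply Rle_trans. apply (sum_growing _ (fun i => if lt_dec i (M n) then w n else 0)).
    intro i. destruct (HC i) as [d [Hd [_ Hh]]]. destruct (terms_fin C delta HCd i) as [_ [Hd' _]].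
    rewrite Hd in Hd'. injection Hd' as <-. auto.
    rewrite sum_ind_w. unfold w. rewrite <- (Rinv_r (INR (M n))) by (pose proof (INR_M_pos n); lra).
    apply Rmult_le_compat_r. left; apply Rinv_0_lt_compat, INR_M_pos. apply le_INR. lia.
  - assert (Hcs : CS delta (Fin v)). { exists C. split; auto. }
    unfold Hh_delta, ER_inf. destruct (excluded_middle_informative _) as [_|Hn'].
    + eexists. split. reflexivity. eapply Rle_trans; [|exact Hv1]. apply Rinf_lb.
      * exists 0. intros y Hy. apply (CS_nonneg delta y). exact Hy.
      * exact Hcs.
    + exfalso. apply Hn'. exists v. exact Hcs.
Qed.

Lemma Hh_fin : ER_lt (Hh X hh (KS K)) PInf.
Proof.
  unfold Hh, ER_sup. destruct (excluded_middle_informative _) as [[H|H]|H].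
  - exfalso. destruct H as [d [Hd He]]. destruct (Hd_upper d Hd) as [v [Hv _]]. rewrite Hv in He. discriminate.
  - exfalso. apply H. exists 1. intros r [d [Hd He]]. destruct (Hd_upper d Hd) as [v [Hv Hv1]].
    rewrite Hv in He. injection He as ->. auto.
  - simpl. auto.
Qed.

Lemma cover_ge1 r : CS (T 0 / 2) (Fin r) -> 1 <= r.
Proof.
  intros [C [Hcov [Hd Hv]]]. symmetry in Hv.
  pose (dd := ddC C). pose proof (terms_fin C _ Hd) as Htf.
  assert (Hser := ER_series_ge _ (fun i => hh (dd i)) r (fun i => proj1 (Htf i)) Hv).
  apply Rnot_lt_le. intro Hr1. set (eps := (1 - r) / 2). assert (Heps : 0 < eps) by (unfold eps; lra).
  assert (Hch : forall i, exists p : nat * R * X,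
    0 < snd (fst p) /\ dd i + 2 * snd (fst p) < T (fst (fst p)) /\
    w (fst (fst p)) <= hh (dd i) + eps * (/2)^(S i) /\ In (snd p) (L (fst (fst p))) /\
    forall x, KS K x -> (exists y, C i y /\ dist y x < snd (fst p)) -> dist x (snd p) < T (fst (fst p)) / 8).
  { intro i. destruct (Htf i) as [_ [Hdi Hdle]]. fold dd in Hdi, Hdle.
    assert (Hdd0 : 0 <= dd i).
    { destruct (classic (exists y, C i y)) as [[y Hy]|Hn].
      - pose proof (diam_pair (C i) (dd i) y y Hdi Hy Hy). rewrite dist_refl in H. auto.
      - unfold diam in Hdi. destruct (excluded_middle_informative _). contradiction. injection Hdi as <-. lra. }
    assert (Hn : exists n, dd i < T n /\ w n <= hh (dd i) + eps * (/2)^(S i)).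
    { pose proof (T_pos 0). pose proof (pow_lt (/2) (S i) ltac:(lra)).
      destruct (classic (exists n, T (S n) <= dd i)) as [Hex|Hnex].
      - destruct (least_ex _ Hex) as [n0 [Hn0 Hmin]]. exists n0. split.
        + destruct n0. lra. apply Rnot_le_lt. apply Hmin. lia.
        + pose proof (hh_ge_w n0 (dd i) Hn0). nra.
      - destruct (w_small (eps * (/2)^(S i)) ltac:(nra)) as [n Hn]. exists n. split.
        + destruct n. lra. apply Rnot_le_lt. intro. apply Hnex. eauto.
        + pose proof (hh_nonneg (dd i)). lra. }
    destruct Hn as [n [Hn1 Hn2]].
    set (eta := (T n - dd i) / 3).
    destruct (classic (exists x0, KS K x0 /\ exists y, C i y /\ dist y x0 < eta)) as [[x0 [Hx0 [y0 [Hy0 Hdy0]]]]|Hno].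
    - destruct (seq_good n) as [_ [H2 _]]. destruct (H2 x0 Hx0) as [c [Hc Hdc]].
      exists (n, eta, c). simpl. split. unfold eta; lra. split. unfold eta; lra. split; auto. split; auto.
      intros x Hx [y [Hy Hdy]]. destruct (H2 x Hx) as [c' [Hc' Hdc']].
      assert (c' = c).
      { apply (same_center X (KS K) (T n) (L n) x x0); auto. apply seq_good. apply T_pos.
        pose proof (diam_pair (C i) (dd i) y y0 Hdi Hy Hy0).
        pose proof (dist_tri X x y x0). pose proof (dist_tri X y y0 x0).
        rewrite (dist_sym X x y) in H0. unfold eta in *. lra. }
      subst; auto.
    - destruct (L_ne n) as [c Hc]. exists (n, eta, c). simpl. split. unfold eta; lra. split. unfold eta; lra.
      split; auto. split; auto. intros x Hx Hy. exfalso. apply Hno. eauto. }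
  pose (pf := fun i => proj1_sig (constructive_indefinite_description _ (Hch i))).
  assert (Hpf : forall i, _) by (intro i; exact (proj2_sig (constructive_indefinite_description _ (Hch i)))).
  fold pf in Hpf.
  pose (nF := fun i => fst (fst (pf i))). pose (eF := fun i => snd (fst (pf i))). pose (cF := fun i => snd (pf i)).
  pose (U := fun i x => exists y, C i y /\ dist y x < eF i).
  destruct (KS_cpt X K nat U) as [Lidx HL].
  - intros i x [y [Hy Hdy]]. exists (eF i - dist y x). split. lra.
    intros z Hz. exists y. split; auto. pose proof (dist_tri X y x z). lra.
  - intros x Hx. destruct (Hcov x Hx) as [i Hi]. exists i. exists x. split; auto. rewrite dist_refl.
    apply (proj1 (Hpf i)).
  - pose (nmax := fold_right max 0%nat Lidx).
    assert (Hnmax : forall i, In i Lidx -> (i <= nmax)%nat).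
    { intros i Hi. unfold nmax. clear -Hi. induction Lidx; simpl in *. contradiction. destruct Hi as [->|Hi]. lia. specialize (IHLidx Hi). lia. }
    pose (NB := fold_right max 0%nat (map nF (seq 0 (S nmax)))).
    assert (HNB : forall i, (i <= nmax)%nat -> (nF i <= NB)%nat).
    { intros i Hi. unfold NB. assert (In (nF i) (map nF (seq 0 (S nmax)))).
      { apply in_map. apply in_seq. lia. }
      clear -H. induction (map nF (seq 0 (S nmax))); simpl in *. contradiction. destruct H as [->|H]. lia. specialize (IHl H). lia. }
    assert (Hcount : INR (M NB) <= sum_f_R0 (fun i => INR (length (filter (nearb X (T (nF i)) (cF i)) (L NB)))) nmax).
    { apply count_cover. intros b Hb. destruct (seq_good NB) as [_ [_ [H3 _]]]. destruct (H3 b Hb) as [x [Hx Hdx]].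
      destruct (HL x Hx) as [i [Hi HU]]. exists i. split. apply Hnmax; auto.
      apply nearb_true. destruct (Hpf i) as [_ [_ [_ [_ H5]]]]. specialize (H5 x Hx HU). change (dist x (cF i) < T (nF i) / 8) in H5.
      pose proof (T_anti (nF i) NB (HNB i (Hnmax i Hi))). pose proof (T_pos NB).
      pose proof (dist_tri X b x (cF i)). rewrite (dist_sym X b x) in H1. lra. }
    assert (Hw : 1 <= sum_f_R0 (fun i => w (nF i)) nmax).
    { replace 1 with (INR (M NB) * w NB) by (unfold w; field; pose proof (INR_M_pos NB); lra).
      eapply Rle_trans. apply Rmult_le_compat_r. left; apply w_pos. exact Hcount.
      rewrite Rmult_comm, scal_sum. right. apply sum_eq. intros i Hi.
      destruct (Hpf i) as [_ [_ [_ [Hc _]]]]. change (In (cF i) (L (nF i))) in Hc.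
      assert (HE : NB = (nF i + (NB - nF i))%nat) by (pose proof (HNB i Hi); lia).
      rewrite <- (w_ratio (nF i) (NB - nF i)). rewrite <- HE.
      replace (L NB) with (L (nF i + (NB - nF i))%nat) by (f_equal; auto).
      rewrite desc_count by auto. reflexivity. }
    assert (Hw2 : sum_f_R0 (fun i => w (nF i)) nmax <= sum_f_R0 (fun i => hh (dd i)) nmax + eps).
    { eapply Rle_trans. apply (sum_growing _ (fun i => hh (dd i) + eps * (/2)^(S i))).
      intro i. destruct (Hpf i) as [_ [_ [H _]]]. exact H.
      rewrite plus_sum.
      assert (Hg : sum_f_R0 (fun i => eps * (/2)^(S i)) nmax = eps * sum_f_R0 (fun i => (/2)^(S i)) nmax).
      { rewrite scal_sum. apply sum_eq. intros; ring. }
      rewrite Hg, geo_sum. pose proof (pow_lt (/2) (S (S nmax)) ltac:(lra)). simpl in H |- *. nra. }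
    pose proof (Hser nmax). unfold eps in *. lra.
Qed.

Lemma Hh_pos : ER_lt (Fin 0) (Hh X hh (KS K)).
Proof.
  unfold Hh, ER_sup. destruct (excluded_middle_informative _) as [H|H].
  - simpl. auto.
  - simpl. assert (Hb : bound (fun r => exists delta, 0 < delta /\ Fin r = Hh_delta X hh delta (KS K))).
    { apply NNPP. intro. apply H. right. auto. }
    destruct (Hh_delta X hh (T 0 / 2) (KS K)) eqn:E.
    + assert (1 <= r).
      { unfold Hh_delta, ER_inf in E. destruct (excluded_middle_informative _) as [Hex|]; [|discriminate].
        injection E as <-. apply Rinf_ge. exact Hex. intros y Hy. apply cover_ge1. exact Hy. }
      apply Rlt_le_trans with r. lra. apply Rsup_ub. exact Hb. exists (T 0 / 2). split. pose proof (T_pos 0). lra. auto.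
    + exfalso. apply H. left. exists (T 0 / 2). split. pose proof (T_pos 0). lra. auto.
Qed.

End Analysis.

Lemma analysis_main (X : MetricSpace) (K : KX X)
  (Hstart : exists k l, Good X (KS K) (tt k) l)
  (Hstep : forall k l, Good X (KS K) (tt k) l ->
     exists k' l' m, (k < k')%nat /\ (2 <= m)%nat /\ Good X (KS K) (tt k') l' /\ Qc X (tt k) l l' m) :
  exists h : R -> R, gauge h /\ continuous_nonneg h /\
      ER_lt (Fin 0) (Hh X h (KS K)) /\ ER_lt (Hh X h (KS K)) PInf.
Proof.
  exists (hh X K Hstart Hstep). split. apply hh_gauge. split. apply hh_cont. split. apply Hh_pos. apply Hh_fin.
Qed.

Theorem mainTheorem2 (X : MetricSpace)
  (HX : polish_space X) (Hperf : perfect_space X) :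
  generic_compact X (fun K => exists h : R -> R,
      gauge h /\ continuous_nonneg h /\
      ER_lt (Fin 0) (Hh X h K) /\ ER_lt (Hh X h K) PInf).
Proof.
  unfold generic_compact, comeager_d, meager_d.
  exists (fun n => match n with O => NE X | S k => NN X k end). split.
  - intro n. destruct n. apply nd_E. apply nd_N, Hperf.
  - intros K HnP. apply NNPP. intro Hno. apply HnP. apply analysis_main.
    + apply NNPP. intro H1. apply Hno. exists 0%nat. intros k l Hg. apply H1. eauto.
    + intros k l Hg. apply NNPP. intro H1. apply Hno. exists (S k). exists l. split; auto.
Qed.
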